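(* Let $p,q$ be positive integers, with all notation as in the context (in particular $e_s$, $T_e$, $N_{T_c,e}$). Then for every positive integer $e$ and every positive integer $T_c>T_{e_s}$, $$2N_{T_c,e}=N_{2T_c,e+1}.$$
   Context: Let $\mathbf{C}=\begin{bmatrix}1 & p\\ q & 1+pq\end{bmatrix}$. The Cat map over $\mathbb{Z}_{2^e}$ is the bijection $v\mapsto \mathbf{C}v\bmod 2^e$ of $\mathbb{Z}_{2^e}^2$; a cycle of length $n$ is an orbit of a point $v$ for which $n$ is the least positive integer with $\mathbf{C}^n v\equiv v\pmod{2^e}$. $N_{T_c,e}$ denotes the number of cycles of length $T_c$ of the Cat map over $\mathbb{Z}_{2^e}$, and $T_e$ denotes its least period (least $n\ge1$ with $\mathbf{C}^n\equiv I\pmod{2^e}$). Put $A=pq+2$, $B=\sqrt{A^2-4}$, $G_n=\left(\frac{A+B}{2}\right)^n+\left(\frac{A-B}{2}\right)^n$, $H_n=\frac{1}{B}\left(\left(\frac{A+B}{2}\right)^n-\left(\frac{A-B}{2}\right)^n\right)$ (integers). For a nonzero integer $m$ let $v_2(m)$ be the largest $x$ with $2^x\mid m$. Let $e_p=v_2(p)$, $e_q=v_2(q)$; $T_1=3$ if $p,q$ are both odd, $T_1=2$ if exactly one of $p,q$ is odd, $T_1=1$ if both are even; $\hat h=-1$ if $e_p+e_q=0$ and $\hat h=\min(e_p,e_q)$ otherwise; $e_{s,h}=v_2(H_{T_1})$; $m_0=1$ if $\frac12 G_{T_1}\not\equiv 1\pmod 4$ and $m_0=0$ otherwise; $e_{s,g}=v_2\left(\frac12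 G_{2^{m_0}T_1}-1\right)$; $x_0=e_{s,h}+m_0+\hat h-e_{s,g}$ if $e_{s,g}<e_{s,h}+m_0+\hat h$ and $x_0=0$ otherwise; and $e_s=e_{s,h}+m_0+\hat h+x_0$. *)

(* Defs.v *)
From mathcomp Require Import all_boot all_order all_algebra.
Set Implicit Arguments. Unset Strict Implicit. Unset Printing Implicit Defensive.
Import Order.TTheory GRing.Theory Num.Theory.
Local Open Scope ring_scope.

Definition catC (p q : nat) : 'M[int]_2 :=
  \matrix_(i < 2, j < 2)
     (if i == 0 :> nat then (if j == 0 :> nat then 1 else p%:Z)
      else (if j == 0 :> nat then q%:Z else (1 + p * q)%N%:Z)).

Lemma pow2_gt0 (e : nat) : (0 < 2 ^ e)%N.
Proof. by rewrite expn_gt0. Qed.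

Definition pt (e : nat) := ('I_(2 ^ e) * 'I_(2 ^ e))%type.

Definition mkres (e m : nat) : 'I_(2 ^ e) := Ordinal (ltn_pmod m (pow2_gt0 e)).

Definition cat_map (p q e : nat) (v : pt e) : pt e :=
  (mkres e (1 * v.1 + p * v.2)%N, mkres e (q * v.1 + (1 + p * q) * v.2)%N).

Arguments cat_map : clear implicits.

Definition least_period (T : eqType) (f : T -> T) (v : T) (n : nat) : bool :=
  [&& (0 < n)%N, iter n f v == v &
      [forall m : 'I_n, (0 < m)%N ==> (iter m f v != v)]].

Definition cycle_of (T : finType) (f : T -> T) (v : T) : {set T} :=
  [set y | fconnect f v y].

Definition Ncycles (p q n e : nat) : nat :=
  #|[set cycle_of (cat_map p q e) v | v : pt e & least_period (cat_map p q e) v n]|.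

Definition is_least_period_mx (p q e n : nat) : Prop :=
  (0 < n)%N /\
  (forall i j, (((catC p q) ^+ n) i j = (1%:M : 'M[int]_2) i j %[mod (2 ^ e)%N%:Z])%Z) /\
  (forall m, (0 < m < n)%N ->
     exists i j, (((catC p q) ^+ m) i j <> (1%:M : 'M[int]_2) i j %[mod (2 ^ e)%N%:Z])%Z).

(* A = pq + 2;  G_n, H_n are the integer sequences
   G_n = ((A+B)/2)^n + ((A-B)/2)^n,  H_n = (((A+B)/2)^n - ((A-B)/2)^n)/B,
   given through the linear recurrence with characteristic polynomial
   x^2 - A x + 1 that they satisfy (both roots have sum A and product 1). *)
Definition Acoef (p q : nat) : int := (p * q + 2)%N%:Z.


Fixpoint Gseq (A : int) (n : nat) : int :=
  match n with
  | 0 => 2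
  | 1 => A
  | (m.+1 as k).+1 => A * Gseq A k - Gseq A m
  end.

Fixpoint Hseq (A : int) (n : nat) : int :=
  match n with
  | 0 => 0
  | 1 => 1
  | (m.+1 as k).+1 => A * Hseq A k - Hseq A m
  end.

Definition Gn (p q n : nat) : int := Gseq (Acoef p q) n.
Definition Hn (p q n : nat) : int := Hseq (Acoef p q) n.

Definition v2 (m : int) : nat := logn 2 `|m|%N.

Definition e_p (p : nat) : nat := logn 2 p.

Definition T1 (p q : nat) : nat :=
  if odd p && odd q then 3 else if odd p || odd q then 2 else 1.

Definition hhat (p q : nat) : int :=
  if (e_p p + e_p q == 0)%N then -1 else (minn (e_p p) (e_p q))%:Z.

Definition e_sh (p q : nat) : nat := v2 (Hn p q (T1 p q)).

Definition m0 (p q : nat) : nat :=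
  if ((Gn p q (T1 p q) %/ 2)%Z %% 4)%Z != 1 then 1 else 0.

Definition e_sg (p q : nat) : nat :=
  v2 ((Gn p q (2 ^ m0 p q * T1 p q)%N %/ 2)%Z - 1).

Definition x0 (p q : nat) : int :=
  let b := (e_sh p q)%:Z + (m0 p q)%:Z + hhat p q in
  if (e_sg p q)%:Z < b then b - (e_sg p q)%:Z else 0.

Definition e_s (p q : nat) : int :=
  (e_sh p q)%:Z + (m0 p q)%:Z + hhat p q + x0 p q.

(* Main.v *)
Require Import Defs.
From mathcomp Require Import all_boot all_order all_algebra.
From mathcomp Require Import zify ring.
Set Implicit Arguments. Unset Strict Implicit. Unset Printing Implicit Defensive.

Definition b4 := (bool * bool * bool * bool)%type.
Definition b2 := (bool * bool)%type.
Definition mulb4 (a b : b4) : b4 :=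
  let: (a00, a01, a10, a11) := a in let: (b00, b01, b10, b11) := b in
  ((a00 && b00) (+) (a01 && b10), (a00 && b01) (+) (a01 && b11),
   (a10 && b00) (+) (a11 && b10), (a10 && b01) (+) (a11 && b11)).
Definition mulv (a : b4) (v : b2) : b2 :=
  let: (a00, a01, a10, a11) := a in let: (v0, v1) := v in
  ((a00 && v0) (+) (a01 && v1), (a10 && v0) (+) (a11 && v1)).
Definition addv (v w : b2) : b2 := (v.1 (+) w.1, v.2 (+) w.2).
Definition one4 : b4 := (true, false, false, true).
Definition powb (Z : b4) k := iter k (mulb4 Z) one4.
Definition hs (Z : b4) (u : b2) k := iter k (fun h => addv (mulv Z h) u) (false, false).

Definition ok_small (Z : b4) (u : b2) (r : nat) :=
  ~~ odd r || (powb Z r != one4) || (hs Z u r == (false, false)) || (mulv Z u == u).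

Lemma per_ok Z u : (powb Z 14 = powb Z 2) /\ (hs Z u 14 = hs Z u 2).
Proof. by move: Z u => [[[[] []] []] []] [[] []]; split; vm_compute. Qed.

Lemma small_ok Z u : all (ok_small Z u) (iota 0 14).
Proof. by move: Z u => [[[[] []] []] []] [[] []]; vm_compute. Qed.

Lemma per_gen Z u k : (2 <= k)%N -> powb Z (k + 12) = powb Z k /\ hs Z u (k + 12) = hs Z u k.
Proof.
move=> hk; have [a b] := per_ok Z u.
elim: k hk => [//|k ih]; rewrite leq_eqVlt => /orP [/eqP <- //|].
rewrite ltnS => /ih [ea eb].
by rewrite addSn /powb /hs !iterS -/(powb _ _) -/(hs _ _ _) ea eb.
Qed.

Lemma f2key Z u r : odd r -> powb Z r = one4 -> hs Z u r <> (false, false) -> mulv Z u = u.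
Proof.
elim/ltn_ind: r => r ih or pr hr.
case: (ltnP r 14) => rl.
  have := allP (small_ok Z u) r; rewrite mem_iota add0n rl => /(_ isT).
  rewrite /ok_small or pr eqxx /=; case: eqP => //= _ /eqP //.
have [ea eb] : powb Z (r - 12 + 12) = powb Z (r - 12) /\ hs Z u (r - 12 + 12) = hs Z u (r - 12) by apply: per_gen; lia.
have hr' : r = (r - 12 + 12)%N by lia.
apply: (ih (r - 12)%N); first by lia.
- have : odd (r - 12 + 12) by rewrite -hr'.
  by rewrite oddD addbF.
- by rewrite -ea -hr'.
- by rewrite -eb -hr'.
Qed.

Lemma hs2 Z u : mulv Z u = u -> hs Z u 2 = (false, false).
Proof. by move: Z u => [[[[] []] []] []] [[] []]. Qed.
Lemma hs0 Z u : hs Z u 0 = (false, false).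
Proof. by []. Qed.

Section Cyc.
Variables (T : finType) (f : T -> T).

Lemma iter_period v n c : iter n f v = v -> iter (c * n) f v = v.
Proof. by move=> h; elim: c => [//|c ih]; rewrite mulSn iterD ih h. Qed.

Lemma iter_mod v n k : iter n f v = v -> iter k f v = iter (k %% n) f v.
Proof. by move=> h; rewrite {1}(divn_eq k n) addnC iterD iter_period. Qed.

Lemma iter_comm m k v : iter m f (iter k f v) = iter k f (iter m f v).
Proof. by rewrite -!iterD addnC. Qed.

Lemma lpP v n : reflect [/\ (0 < n)%N, iter n f v = v & forall m, (0 < m < n)%N -> iter m f v <> v]
  (least_period f v n).
Proof.
apply: (iffP and3P) => [[n0 /eqP h /forallP hm]|[n0 h hm]].
  split => // m /andP [m0 mn]; have := hm (Ordinal mn); rewrite /= m0 /= => /eqP; exact.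
split => //; first by apply/eqP.
by apply/forallP => -[m mn] /=; apply/implyP => m0; apply/eqP; apply: hm; rewrite m0.
Qed.

Lemma lp_shift v n k : least_period f v n -> least_period f (iter k f v) n.
Proof.
move=> /lpP [n0 h hm].
have back : iter (n - k %% n) f (iter k f v) = v.
  rewrite (iter_mod k h) -iterD subnK //; exact: ltnW (ltn_pmod _ n0).
apply/lpP; split => //; first by rewrite iter_comm h.
move=> m hmn e; apply: (hm m hmn).
by rewrite -{1}back iter_comm e back.
Qed.

Lemma cycle_iter v n : least_period f v n ->
  cycle_of f v = [set iter (val k) f v | k : 'I_n].
Proof.
move=> /lpP [n0 h hm]; apply/setP => y; rewrite inE; apply/idP/imsetP.
  move=> c; exists (Ordinal (ltn_pmod (findex f v y) n0)) => //=.
  by rewrite -iter_mod // iter_findex.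
by case=> k _ ->; apply: fconnect_iter.
Qed.

Lemma card_cycle v n : least_period f v n -> #|cycle_of f v| = n.
Proof.
move=> hl; rewrite (cycle_iter hl) card_imset ?card_ord //.
move: hl => /lpP [n0 h hm].
have key : forall i j : 'I_n, (i < j)%N -> iter i f v <> iter j f v.
  move=> i j ij e; apply: (hm (n - j + i)); first by have := ltn_ord j; lia.
  by rewrite iterD e -iterD subnK ?h // ltnW.
move=> i j e; apply: val_inj; case: (ltngtP i j) => // ij; exfalso.
  exact: key ij e.
exact: key ij (esym e).
Qed.

Lemma cycle_mem v n y : least_period f v n -> y \in cycle_of f v ->
  least_period f y n /\ cycle_of f y = cycle_of f v.
Proof.
move=> hl; rewrite {1}(cycle_iter hl) => /imsetP [k _ ->]; split; first exact: lp_shift.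
move: hl => /lpP [n0 h hm].
have back : iter (n - k) f (iter k f v) = v by rewrite -iterD subnK ?h // ltnW.
apply/setP => z; rewrite !inE; apply/idP/idP => c.
  exact: connect_trans (fconnect_iter f k v) c.
by apply: connect_trans (fconnect_iter f (n - k) _) _; rewrite back.
Qed.

Lemma cycle_self v : v \in cycle_of f v.
Proof. by rewrite inE connect0. Qed.

Lemma count_cycles n : (0 < n)%N ->
  #|[set v | least_period f v n]| = (n * #|[set cycle_of f v | v : T & least_period f v n]|)%N.
Proof.
move=> n0; set S := [set v | least_period f v n]; set P := [set cycle_of f v | v : T & _].
have cov : cover P = S.
  apply/setP => y; apply/bigcupP/idP.
    case=> A /imsetP [v vS ->] yA; rewrite inE.
    by rewrite inE in vS; have [] := cycle_mem vS yA.
  by move=> yS; exists (cycle_of f y); [apply/imsetP; exists y | apply: cycle_self].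
have triv : trivIset P.
  apply/trivIsetP => A B /imsetP [v vS ->] /imsetP [w wS ->] neq.
  rewrite inE in vS; rewrite inE in wS.
  apply/pred0P => y /=; apply/negP => /andP [yv yw]; move/negP: neq; apply.
  have [_ e1] := cycle_mem vS yv; have [_ e2] := cycle_mem wS yw.
  by rewrite -e1 -e2.
move/eqP: triv; rewrite cov => <-.
rewrite mulnC -sum_nat_const; apply: eq_bigr => A /imsetP [v vS ->].
by rewrite inE in vS; apply: card_cycle.
Qed.
End Cyc.

Import Order.TTheory GRing.Theory Num.Theory.
Local Open Scope ring_scope.

Definition o0 : 'I_2 := ord0.
Definition o1 : 'I_2 := ord_max.
Lemma mul2E m (X : 'M[int]_2) (Y : 'M[int]_(2, m)) i j :
  (X *m Y) i j = X i o0 * Y o0 j + X i o1 * Y o1 j.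
Proof. rewrite mxE !big_ord_recl big_ord0 addr0; congr (_ + X i _ * Y _ j); exact: val_inj. Qed.
Lemma ord2P (i : 'I_2) : i = o0 \/ i = o1.
Proof. case: i => [[|[|n]] h]; [left|right|by []]; exact: val_inj. Qed.


Lemma odd_cancel e (D w : int) : ~~ (2 %| D)%Z ->
  ((2 ^ e)%N%:Z %| D * w)%Z -> ((2 ^ e)%N%:Z %| w)%Z.
Proof.
move=> oD; rewrite Gauss_dvdzr //.
rewrite coprimezE /= coprimeXl // coprime2n.
by move: oD; rewrite dvdzE /= dvdn2 negbK.
Qed.

Lemma key4 e (a b c d w0 w1 : int) : (4 %| a)%Z -> (4 %| d)%Z -> (2 %| b)%Z -> (2 %| c)%Z ->
  (4 %| b)%Z \/ (4 %| c)%Z ->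
  ((2 ^ e.+1)%N%:Z %| a * w0 + b * w1 + (w0 + w0))%Z ->
  ((2 ^ e.+1)%N%:Z %| c * w0 + d * w1 + (w1 + w1))%Z ->
  ((2 ^ e)%N%:Z %| w0)%Z /\ ((2 ^ e)%N%:Z %| w1)%Z.
Proof.
move=> /dvdzP [a1 ->] /dvdzP [d1 ->] /dvdzP [b1 ->] /dvdzP [c1 ->] h4.
rewrite expnS PoszM.
have -> : a1 * 4 * w0 + b1 * 2 * w1 + (w0 + w0) = 2 * ((2 * a1 + 1) * w0 + b1 * w1) by ring.
have -> : c1 * 2 * w0 + d1 * 4 * w1 + (w1 + w1) = 2 * (c1 * w0 + (2 * d1 + 1) * w1) by ring.
rewrite !dvdz_mul2l // => hs ht.
have oD : ~~ (2 %| (2 * a1 + 1) * (2 * d1 + 1) - b1 * c1)%Z.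
  case: h4 => /dvdzP [k hk].
    have hb : b1 = 2 * k by lia.
    by rewrite hb; apply/negP => /dvdzP [z hz]; lia.
  have hc : c1 = 2 * k by lia.
  by rewrite hc; apply/negP => /dvdzP [z hz]; lia.
split; apply: (odd_cancel oD).
  have -> : ((2 * a1 + 1) * (2 * d1 + 1) - b1 * c1) * w0 =
     (2 * d1 + 1) * ((2 * a1 + 1) * w0 + b1 * w1) - b1 * (c1 * w0 + (2 * d1 + 1) * w1) by ring.
  by rewrite rpredB // dvdz_mull.
have -> : ((2 * a1 + 1) * (2 * d1 + 1) - b1 * c1) * w1 =
   (2 * a1 + 1) * (c1 * w0 + (2 * d1 + 1) * w1) - c1 * ((2 * a1 + 1) * w0 + b1 * w1) by ring.
by rewrite rpredB // dvdz_mull.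
Qed.


Definition dvM (k : nat) m n (X : 'M[int]_(m, n)) :=
  forall i j, ((2 ^ k)%N%:Z %| X i j)%Z.

Lemma dvM_add k m n (X Y : 'M[int]_(m, n)) : dvM k X -> dvM k Y -> dvM k (X + Y).
Proof. by move=> hX hY i j; rewrite mxE rpredD. Qed.
Lemma dvM_opp k m n (X : 'M[int]_(m, n)) : dvM k X -> dvM k (- X).
Proof. by move=> hX i j; rewrite mxE rpredN. Qed.
Lemma dvM_sub k m n (X Y : 'M[int]_(m, n)) : dvM k X -> dvM k Y -> dvM k (X - Y).
Proof. by move=> hX hY; apply: dvM_add => //; apply: dvM_opp. Qed.
Lemma dvM_le k l m n (X : 'M[int]_(m, n)) : (k <= l)%N -> dvM l X -> dvM k X.
Proof.
move=> kl hX i j; apply: dvdz_trans (hX i j).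
by rewrite dvdzE /= dvdn_exp2l.
Qed.
Lemma dvM_mul a b m n r (X : 'M[int]_(m, n)) (Y : 'M[int]_(n, r)) :
  dvM a X -> dvM b Y -> dvM (a + b) (X *m Y).
Proof.
move=> hX hY i j; rewrite mxE; apply: (big_ind (fun z => _ %| z)%Z) => //.
  by move=> *; rewrite rpredD.
by move=> l _; rewrite expnD PoszM dvdz_mul.
Qed.
Lemma dvM_mull a m n r (X : 'M[int]_(m, n)) (Y : 'M[int]_(n, r)) :
  dvM a Y -> dvM a (X *m Y).
Proof. by move=> hY; rewrite -[a]add0n; apply: dvM_mul => // i j; rewrite expn0 dvd1z. Qed.
Lemma dvM_mulr a m n r (X : 'M[int]_(m, n)) (Y : 'M[int]_(n, r)) :
  dvM a X -> dvM a (X *m Y).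
Proof. by move=> hX; rewrite -[a]addn0; apply: dvM_mul => // i j; rewrite expn0 dvd1z. Qed.
Lemma dvM_double k m n (X : 'M[int]_(m, n)) : dvM k X -> dvM k.+1 (X + X).
Proof.
move=> hX i j; rewrite mxE -mulr2n -mulr_natl expnS PoszM.
by rewrite dvdz_mul.
Qed.
Lemma dvM0 k m n : dvM k (0 : 'M[int]_(m, n)).
Proof. by move=> i j; rewrite mxE dvdz0. Qed.

Section Good.
Variable C : 'M[int]_2.

Definition good (e n : nat) k (x : 'M[int]_(2, k)) := dvM e ((C ^+ n - 1) *m x).

Lemma powD_id (n m : nat) : C ^+ (n + m) - 1 = C ^+ m * (C ^+ n - 1) + (C ^+ m - 1).
Proof. by rewrite addnC exprD mulrBr mulr1 addrA subrK. Qed.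

Lemma good0 e k (x : 'M_(2, k)) : good e 0 x.
Proof. by rewrite /good expr0 subrr mul0mx; apply: dvM0. Qed.

Lemma goodD e n m k (x : 'M_(2, k)) : good e n x -> good e m x -> good e (n + m) x.
Proof.
rewrite /good => hn hm; rewrite powD_id mulmxDl.
have -> : (C ^+ m * (C ^+ n - 1)) *m x = C ^+ m *m ((C ^+ n - 1) *m x) by rewrite mulmxA.
by apply: dvM_add => //; apply: dvM_mull.
Qed.

Lemma goodB e n m k (x : 'M_(2, k)) : good e (n + m) x -> good e n x -> good e m x.
Proof.
rewrite /good => hnm hn; move: hnm; rewrite powD_id mulmxDl.
have -> : (C ^+ m * (C ^+ n - 1)) *m x = C ^+ m *m ((C ^+ n - 1) *m x) by rewrite mulmxA.
move=> hnm.
have -> : (C ^+ m - 1) *m x = (C ^+ m *m ((C ^+ n - 1) *m x) + (C ^+ m - 1) *m x)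
             - C ^+ m *m ((C ^+ n - 1) *m x) by rewrite addrAC subrr add0r.
by apply: dvM_sub => //; apply: dvM_mull.
Qed.

Lemma goodM e n c k (x : 'M_(2, k)) : good e n x -> good e (c * n) x.
Proof. move=> h; elim: c => [|c ih]; first by rewrite mul0n; apply: good0. by rewrite mulSn; apply: goodD. Qed.

Lemma good_le e e' n k (x : 'M_(2, k)) : (e <= e')%N -> good e' n x -> good e n x.
Proof. by move=> le; apply: dvM_le. Qed.

Definition lp e k (x : 'M_(2, k)) P :=
  (0 < P)%N /\ good e P x /\ forall m, (0 < m < P)%N -> ~ good e m x.

Lemma lp_dvd e k (x : 'M_(2, k)) P n : lp e x P -> good e n x <-> (P %| n)%N.
Proof.
move=> [P0 [gP mP]]; split; last by move=> /dvdnP [c ->]; apply: goodM.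
move=> gn; case: (posnP (n %% P)%N) => [h|r0]; first by apply/eqP. exfalso.
have hn : n = ((n %/ P) * P + n %% P)%N by rewrite -divn_eq.
apply: (mP (n %% P)%N); first by rewrite r0 ltn_pmod.
by apply: (@goodB _ ((n %/ P) * P)%N); [rewrite -hn | apply: goodM].
Qed.

Lemma sq_id (Y : 'M[int]_2) : Y ^+ 2 - 1 = (Y - 1) * (Y - 1) + ((Y - 1) + (Y - 1)).
Proof.
rewrite mulrBl !mulrBr !mulr1 !mul1r -expr2.
by rewrite addrA subrK addrA subrK.
Qed.


Lemma dbl_id (n : nat) : C ^+ (n * 2) - 1 = (C ^+ n - 1) * (C ^+ n - 1) + ((C ^+ n - 1) + (C ^+ n - 1)).
Proof. by rewrite exprM sq_id. Qed.

Lemma dbl1 e n k (x : 'M_(2, k)) : dvM 1 (C ^+ n - 1) -> good e n x -> good e.+1 (n * 2) x.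
Proof.
rewrite /good dbl_id => h1 hn.
rewrite mulmxDl mulmxDl.
have -> : ((C ^+ n - 1) * (C ^+ n - 1)) *m x = (C ^+ n - 1) *m ((C ^+ n - 1) *m x) by rewrite mulmxA.
apply: dvM_add; first by rewrite -add1n; apply: dvM_mul.
by apply: dvM_double.
Qed.

Lemma dvM1_mul n c : dvM 1 (C ^+ n - 1) -> dvM 1 (C ^+ (c * n) - 1).
Proof.
move=> h; have h' : good 1 n (1%:M : 'M_2) by rewrite /good mulmx1.
by move: (goodM c h'); rewrite /good mulmx1.
Qed.

Lemma sqpow n j : dvM 1 (C ^+ n - 1) -> dvM j.+1 (C ^+ (n * 2 ^ j) - 1).
Proof.
move=> h; elim: j => [|j ih]; first by rewrite expn0 muln1.
rewrite expnS mulnCA mulnC dbl_id.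
apply: dvM_add; last by apply: dvM_double.
by apply: (@dvM_le _ (j.+1 + j.+1)); [lia | apply: dvM_mul].
Qed.

Definition Good4 (M : 'M[int]_2) := dvM 1 (M - 1) /\ (4 %| (M - 1) o0 o0)%Z /\ (4 %| (M - 1) o1 o1)%Z /\ ((4 %| (M - 1) o0 o1)%Z \/ (4 %| (M - 1) o1 o0)%Z).

Lemma dbl2 e n k (x : 'M_(2, k)) : Good4 (C ^+ n) -> good e.+1 (n * 2) x -> good e n x.
Proof.
move=> [h1 [ha [hd hbc]]]; rewrite /good dbl_id mulmxDl mulmxDl.
have -> : ((C ^+ n - 1) * (C ^+ n - 1)) *m x = (C ^+ n - 1) *m ((C ^+ n - 1) *m x) by rewrite mulmxA.
move: (C ^+ n - 1) h1 ha hd hbc => X h1 ha hd hbc.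
move: (X *m x) => w h i j.
have hb : (2 %| X o0 o1)%Z by apply: h1.
have hc : (2 %| X o1 o0)%Z by apply: h1.
have h0 := h o0 j; have h1' := h o1 j.
rewrite mxE mul2E mxE in h0; rewrite mxE mul2E mxE in h1'.
have [k0 k1] := key4 ha hd hb hc hbc h0 h1'.
by case: (ord2P i) => ->.
Qed.
End Good.

Definition par (x : int) : bool := ~~ (2 %| x)%Z.
Lemma parD x y : par (x + y) = par x (+) par y.
Proof. rewrite /par; case Hx: (2 %| x)%Z; case Hy: (2 %| y)%Z; case Hxy: (2 %| x+y)%Z => //=; lia. Qed.
Lemma parM x y : par (x * y) = par x && par y.
Proof. rewrite /par; case Hx: (2 %| x)%Z; case Hy: (2 %| y)%Z; case Hxy: (2 %| x*y)%Z => //=; nia. Qed.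
Lemma par_eq x y : (2 %| x - y)%Z -> par x = par y.
Proof. rewrite /par => h; case Hx: (2 %| x)%Z; case Hy: (2 %| y)%Z => //=; lia. Qed.

Definition redM (X : 'M[int]_2) : b4 := (par (X o0 o0), par (X o0 o1), par (X o1 o0), par (X o1 o1)).
Definition redV (w : 'cV[int]_2) : b2 := (par (w o0 ord0), par (w o1 ord0)).

Lemma redM_mul (X Y : 'M[int]_2) : redM (X * Y) = mulb4 (redM X) (redM Y).
Proof. by rewrite /redM -[X * Y]/(X *m Y) !mul2E !parD !parM. Qed.
Lemma redV_mul (X : 'M[int]_2) w : redV (X *m w) = mulv (redM X) (redV w).
Proof. by rewrite /redV !mul2E !parD !parM. Qed.
Lemma redV_add v w : redV (v + w) = addv (redV v) (redV w).
Proof. by rewrite /redV !mxE !parD. Qed.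
Lemma id1E (i j : 'I_2) : (1 : 'M[int]_2) i j = ((i == j) : int).
Proof. by change ((1%:M : 'M[int]_2) i j = ((i == j) : int)); rewrite /scalar_mx mxE; case: (i == j). Qed.
Lemma redM1 : redM 1 = one4.
Proof. by rewrite /redM !id1E. Qed.
Lemma redM_pow (Y : 'M[int]_2) k : redM (Y ^+ k) = powb (redM Y) k.
Proof. elim: k => [|k ih]; first by rewrite expr0 redM1. by rewrite exprS redM_mul ih. Qed.
Lemma redM_eq (X Y : 'M[int]_2) : dvM 1 (X - Y) -> redM X = redM Y.
Proof.
move=> h; rewrite /redM; congr (_, _, _, _); apply: par_eq;
  [move: (h o0 o0)|move: (h o0 o1)|move: (h o1 o0)|move: (h o1 o1)];
  by rewrite !mxE expn1.
Qed.
Lemma redV0 w : redV w = (false, false) <-> dvM 1 w.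
Proof.
rewrite /redV /par; split.
  case=> /negbFE h0 /negbFE h1 i j; rewrite expn1 (ord1 j).
  by case: (ord2P i) => ->.
by move=> h; have := h o0 ord0; have := h o1 ord0; rewrite expn1 => -> ->.
Qed.

Definition hm (Y : 'M[int]_2) (u : 'cV[int]_2) k := iter k (fun h => Y *m h + u) 0.

Section Core.
Variable C : 'M[int]_2.

Lemma mod2_step e P r (x : 'cV[int]_2) : good C e P x -> odd r ->
  dvM 1 (C ^+ (r * P) - 1) -> ~ good C e.+1 (r * P) x -> good C e.+1 (P * 2) x.
Proof.
move=> gP or h1 ng.
pose d : int := (2 ^ e)%N%:Z.
pose u : 'cV[int]_2 := \matrix_(i, j) (((C ^+ P - 1) *m x) i j %/ d)%Z.
have d0 : d != 0 by rewrite /d eqz_nat expn_eq0.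
have wu : (C ^+ P - 1) *m x = d *: u.
  by apply/matrixP => i j; rewrite [RHS]mxE [u i j]mxE mulrC divzK //; apply: gP.
have gk : forall k, (C ^+ (k * P) - 1) *m x = d *: hm (C ^+ P) u k.
  elim=> [|k ih]; first by rewrite mul0n expr0 subrr mul0mx /hm /= scaler0.
  rewrite mulSnr powD_id mulmxDl.
  have -> : (C ^+ P * (C ^+ (k * P) - 1)) *m x = C ^+ P *m ((C ^+ (k * P) - 1) *m x) by rewrite mulmxA.
  by rewrite ih wu /hm iterS -/(hm _ _ _) scalerDr scalemxAr.
have gkE : forall k, good C e.+1 (k * P) x <-> dvM 1 (hm (C ^+ P) u k).
  move=> k; rewrite /good gk; split=> h i j; move: (h i j);
    by rewrite ?mxE ?expn1 expnSr PoszM -/d dvdz_mul2l.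
have redh : forall k, redV (hm (C ^+ P) u k) = hs (redM (C ^+ P)) (redV u) k.
  elim=> [|k ih]; first by rewrite /redV /hm /= !mxE.
  by rewrite /hm iterS -/(hm _ _ _) redV_add redV_mul ih.
have key : mulv (redM (C ^+ P)) (redV u) = redV u.
  apply: (f2key (r := r)) => //.
    rewrite -redM_pow -exprM mulnC -redM1; exact: redM_eq.
  rewrite -redh => /redV0 /gkE; exact: ng.
by rewrite mulnC; apply/gkE/redV0; rewrite redh hs2.
Qed.
End Core.

Section T0.
Variables (C : 'M[int]_2) (T0 : nat).
Hypotheses (T0pos : (0 < T0)%N) (hG : Good4 (C ^+ T0)).

Lemma G1 : dvM 1 (C ^+ T0 - 1).
Proof. by case: hG. Qed.

Lemma dvM1_T0 c : dvM 1 (C ^+ (c * T0) - 1).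
Proof. exact: dvM1_mul G1. Qed.

Lemma Good4_pow j : Good4 (C ^+ (T0 * 2 ^ j)).
Proof.
case: j => [|j]; first by rewrite expn0 muln1.
have h : dvM 2 (C ^+ (T0 * 2 ^ j.+1) - 1) by apply: (dvM_le _ (sqpow j.+1 G1)).
split; first by apply: (dvM_le _ h).
by split; [exact: h | split; [exact: h | left; exact: h]].
Qed.

Lemma good_big e k (x : 'M[int]_(2, k)) : good C e (T0 * 2 ^ e) x.
Proof. by apply: dvM_mulr; apply: (dvM_le _ (sqpow e G1)). Qed.

Lemma goodP e n k (x : 'M[int]_(2, k)) :
  reflect (good C e n x) [forall i, forall j, ((2 ^ e)%N%:Z %| ((C ^+ n - 1) *m x) i j)%Z].
Proof.
apply: (iffP forallP) => h.
  by move=> i j; have /forallP := h i; apply.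
by move=> i; apply/forallP => j; apply: h.
Qed.

Lemma exists_lp e k (x : 'M[int]_(2, k)) : exists P, lp C e x P.
Proof.
have ex : exists n, (0 < n)%N && [forall i, forall j, ((2 ^ e)%N%:Z %| ((C ^+ n - 1) *m x) i j)%Z].
  exists (T0 * 2 ^ e)%N; rewrite muln_gt0 T0pos expn_gt0 /=; apply/goodP; exact: good_big.
case: (ex_minnP ex) => P /andP [P0 /goodP gP] mP.
exists P; split => //; split => // m /andP [m0 mlt] gm.
have := mP m; rewrite m0 /=; move/(_ (introT (goodP _ _ _) gm)).
by rewrite leqNgt mlt.
Qed.

Lemma lp_uniq e k (x : 'M[int]_(2, k)) P P' : lp C e x P -> lp C e x P' -> P = P'.
Proof.
move=> h h'; apply/eqP; rewrite eqn_dvd.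
have a : (P %| P')%N by apply/(lp_dvd _ h); case: h' => _ [].
have b : (P' %| P)%N by apply/(lp_dvd _ h'); case: h => _ [].
by rewrite a b.
Qed.

Lemma core e (x : 'cV[int]_2) P : lp C e x P ->
  ((P %| T0)%N -> good C e.+1 (T0 * 2) x) /\ (~~ (P %| T0)%N -> lp C e.+1 x (P * 2)).
Proof.
move=> hl; have [P0 [gP mP]] := hl; split.
  by move=> dP; apply: dbl1 G1 _; apply/(lp_dvd _ hl).
move=> nd.
have ex : exists j, (P %| T0 * 2 ^ j)%N by exists e; apply/(lp_dvd _ hl); exact: good_big.
case: (ex_minnP ex) => m hm mmin.
case: m hm mmin => [|J] hm mmin; first by move: hm; rewrite expn0 muln1 => hm; rewrite hm in nd.
set Q := (T0 * 2 ^ J)%N.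
have nQ : ~~ (P %| Q)%N by apply/negP => h; have := mmin _ h; rewrite ltnn.
have h2Q : (Q * 2 = T0 * 2 ^ J.+1)%N by rewrite /Q expnS; lia.
have [r hr] : exists r, (Q * 2 = r * P)%N by apply/dvdnP; rewrite h2Q.
have or : odd r.
  case: (boolP (odd r)) => // er; exfalso; move/negP: nQ; apply.
  move: er; rewrite -dvdn2 => /dvdnP [r' hr']; apply/dvdnP; exists r'; nia.
have ngQ : ~ good C e Q x by move/(lp_dvd _ hl); apply/negP.
have ng2Q : ~ good C e.+1 (r * P) x by rewrite -hr => /(dbl2 (Good4_pow J)).
have h1 : dvM 1 (C ^+ (r * P) - 1) by rewrite -hr h2Q mulnC; exact: dvM1_T0.
have g2P := mod2_step gP or h1 ng2Q.
split; first by rewrite muln_gt0 P0.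
split => // n /andP [n0 nlt] gn.
have : (P %| n)%N by apply/(lp_dvd _ hl); exact: good_le gn.
case/dvdnP => c hc.
have c1 : c = 1%N by nia.
apply: ng2Q; apply: goodM; suff -> : P = n by exact: gn.
by rewrite hc c1 mul1n.
Qed.

Lemma lift1 e (x : 'cV[int]_2) P : lp C e x P -> (T0 < P)%N -> lp C e.+1 x (P * 2).
Proof.
move=> hl lt; have [_ h] := core hl; apply: h.
by apply/negP => /(dvdn_leq T0pos); rewrite leqNgt lt.
Qed.

Lemma lift2 e (x : 'cV[int]_2) Tc : (T0 < Tc)%N -> lp C e.+1 x (Tc * 2) -> lp C e x Tc.
Proof.
move=> lt hl'.
have [P hP] := exists_lp e x.
case: (ltnP T0 P) => hTP.
  have := lp_uniq (lift1 hP hTP) hl' => /eqP; rewrite eqn_mul2r /= => /eqP <-.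
  exact: hP.
have [c1 c2] := core hP.
case: (boolP (P %| T0)%N) => dP.
  have := c1 dP => /(lp_dvd _ hl') /(dvdn_leq _); rewrite muln_gt0 T0pos => /(_ isT).
  lia.
have := lp_uniq (c2 dP) hl'; lia.
Qed.
End T0.

Lemma v2_ge (m : int) k : m != 0 -> ((2 ^ k)%N%:Z %| m)%Z -> (k <= v2 m)%N.
Proof. by move=> m0 h; rewrite /v2 -pfactor_dvdn // absz_gt0. Qed.

Lemma ep_odd p : odd p -> e_p p = 0%N.
Proof. by move=> op; rewrite /e_p logn_coprime // coprime2n. Qed.

Lemma ep_even p : (0 < p)%N -> ~~ odd p -> (1 <= e_p p)%N.
Proof. by move=> p0 ep; rewrite /e_p -pfactor_dvdn // expn1 dvdn2 ep. Qed.

Lemma ep_not4 p : (0 < p)%N -> ~~ (4 %| p)%N -> (e_p p <= 1)%N.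
Proof. by move=> p0 h; rewrite leqNgt /e_p -pfactor_dvdn. Qed.

Lemma es_ge_b p q : ((e_sh p q)%:Z + (m0 p q)%:Z + hhat p q <= e_s p q).
Proof. by rewrite /e_s /x0 /=; case: ifP => h; lia. Qed.

Lemma es_bounds p q : (0 < p)%N -> (0 < q)%N ->
  (1 <= e_s p q) /\ (~~ (4 %| p)%N -> ~~ (4 %| q)%N -> 2 <= e_s p q).
Proof.
move=> p0 q0; have hb := es_ge_b p q.
suff : (1 <= (e_sh p q)%:Z + (m0 p q)%:Z + hhat p q) /\
  (~~ (4 %| p)%N -> ~~ (4 %| q)%N -> 2 <= (e_sh p q)%:Z + (m0 p q)%:Z + hhat p q).
  by case=> h1 h2; split; [lia | move=> a b; move: (h2 a b); lia].
rewrite /e_sh /hhat /T1 /Hn /Acoef.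
case: (boolP (odd p)) => op; case: (boolP (odd q)) => oq /=.
-
  rewrite (ep_odd op) (ep_odd oq) /=.
  have h3 : (3 <= v2 ((p * q + 2)%N%:Z * ((p * q + 2)%N%:Z * 1 - 0) - 1))%N.
    apply: v2_ge.
      by rewrite subr0 mulr1 subr_eq0; apply/eqP; nia.
    have [c hc] : exists c, (p * q = 2 * c + 1)%N.
      by exists (p * q)./2; rewrite -{1}(odd_double_half (p * q)) oddM op oq; lia.
    rewrite hc; case: (boolP (odd c)) => oc.
      have [d hd] : exists d, (c = 2 * d + 1)%N by exists c./2; rewrite -{1}(odd_double_half c) oc; lia.
      rewrite hd; apply/dvdzP; exists ((d + 1)%:Z * (2 * d%:Z + 3)); rewrite expnS expnS expn1 !PoszM; nia.
    have [d hd] : exists d, (c = 2 * d)%N by exists c./2; rewrite -{1}(odd_double_half c) (negbTE oc); lia.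
    rewrite hd; apply/dvdzP; exists ((2 * d + 1)%:Z * (d%:Z + 1)); rewrite expnS expnS expn1 !PoszM; nia.
  move: h3; set V := v2 _ => h3; split => *; lia.
- rewrite (ep_odd op) add0n; have e1 := ep_even q0 oq.
  rewrite (_ : (e_p q == 0%N) = false); last by apply/negbTE; rewrite -lt0n.
  rewrite min0n.
  have h1 : (1 <= v2 ((p * q + 2)%N%:Z * 1 - 0))%N.
    apply: v2_ge; first by rewrite mulr1 subr0; apply/eqP; lia.
    move: oq; rewrite -dvdn2 => /dvdnP [b ->].
    by apply/dvdzP; exists ((p * b + 1)%N%:Z); rewrite expn1; lia.
  have h2 : ~~ (4 %| q)%N -> (2 <= v2 ((p * q + 2)%N%:Z * 1 - 0))%N.
    move=> n4; apply: v2_ge; first by rewrite mulr1 subr0; apply/eqP; lia.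
    move: oq; rewrite -dvdn2 => e2.
    have [b hb'] : exists b, q = (4 * b + 2)%N by exists (q %/ 4)%N; lia.
    have [a ha] : exists a, p = (2 * a + 1)%N.
      by exists p./2; rewrite -{1}(odd_double_half p) op; lia.
    rewrite ha hb'; apply/dvdzP; exists ((2 * a * b + a + b + 1)%N%:Z).
    rewrite expnS expn1; nia.
  by move: h1 h2; set V := v2 _ => h1 h2; split; [lia | move=> _ n4; move: (h2 n4); lia].
- rewrite (ep_odd oq) addn0; have e1 := ep_even p0 op.
  rewrite (_ : (e_p p == 0%N) = false); last by apply/negbTE; rewrite -lt0n.
  rewrite minn0.
  have h1 : (1 <= v2 ((p * q + 2)%N%:Z * 1 - 0))%N.
    apply: v2_ge; first by rewrite mulr1 subr0; apply/eqP; lia.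
    move: op; rewrite -dvdn2 => /dvdnP [b ->].
    by apply/dvdzP; exists ((q * b + 1)%N%:Z); rewrite expn1; lia.
  have h2 : ~~ (4 %| p)%N -> (2 <= v2 ((p * q + 2)%N%:Z * 1 - 0))%N.
    move=> n4; apply: v2_ge; first by rewrite mulr1 subr0; apply/eqP; lia.
    move: op; rewrite -dvdn2 => e2.
    have [b hb'] : exists b, p = (4 * b + 2)%N by exists (p %/ 4)%N; lia.
    have [a ha] : exists a, q = (2 * a + 1)%N.
      by exists q./2; rewrite -{1}(odd_double_half q) oq; lia.
    rewrite ha hb'; apply/dvdzP; exists ((2 * a * b + a + b + 1)%N%:Z).
    rewrite expnS expn1; nia.
  by move: h1 h2; set V := v2 _ => h1 h2; split; [lia | move=> n4 _; move: (h2 n4); lia].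
- have e1 := ep_even p0 op; have e2 := ep_even q0 oq.
  rewrite (_ : (e_p p + e_p q == 0%N) = false); last by apply/negbTE; lia.
  split; first by lia. move=> n4p n4q.
  have f1 := ep_not4 p0 n4p; have f2 := ep_not4 q0 n4q.
  have -> : m0 p q = 1%N.
    rewrite /m0 /T1 (negbTE op) (negbTE oq) /= /Gn /Acoef /=.
    move: op oq; rewrite -!dvdn2 => d1 d2.
    have [b hb'] : exists b, p = (4 * b + 2)%N by exists (p %/ 4)%N; lia.
    have [a ha] : exists a, q = (4 * a + 2)%N by exists (q %/ 4)%N; lia.
    rewrite ha hb'.
    have -> : ((4 * b + 2) * (4 * a + 2) + 2)%N = (2 * (8 * (a * b) + 4 * a + 4 * b + 3))%N by ring.
    case: ifP => //; lia.
  lia.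
Qed.

Lemma catCE p q : [/\ catC p q o0 o0 = 1, catC p q o0 o1 = p%:Z,
  catC p q o1 o0 = q%:Z & catC p q o1 o1 = (1 + p * q)%N%:Z].
Proof. by rewrite /catC !mxE. Qed.

Lemma inv4q p q n : (4 %| q)%N ->
  [/\ (4 %| (catC p q ^+ n) o1 o0)%Z, (4 %| (catC p q ^+ n) o0 o0 - 1)%Z &
      (4 %| (catC p q ^+ n) o1 o1 - 1)%Z].
Proof.
move=> /dvdnP [k hk]; have hq : q%:Z = k%:Z * 4 by rewrite hk PoszM.
elim: n => [|n [h10 h00 h11]].
  by rewrite expr0 !id1E /=.
have [c00 c01 c10 c11] := catCE p q.
rewrite exprSr -[_ * catC p q]/(_ *m _) !mul2E c00 c01 c10 c11 PoszD PoszM hq.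
move: h10 h00 h11 => /dvdzP [a ha] /dvdzP [b hb] /dvdzP [c hc].
have e00 : (catC p q ^+ n) o0 o0 = b * 4 + 1 by rewrite -hb subrK.
have e11 : (catC p q ^+ n) o1 o1 = c * 4 + 1 by rewrite -hc subrK.
rewrite ha e00 e11.
split; apply/dvdzP.
- by exists (a + (c * 4 + 1) * k%:Z); ring.
- by exists (b + (catC p q ^+ n) o0 o1 * k%:Z); ring.
- by exists (a * p%:Z + c + 4 * c * p%:Z * k%:Z + p%:Z * k%:Z); ring.
Qed.

Lemma inv4p p q n : (4 %| p)%N ->
  [/\ (4 %| (catC p q ^+ n) o0 o1)%Z, (4 %| (catC p q ^+ n) o0 o0 - 1)%Z &
      (4 %| (catC p q ^+ n) o1 o1 - 1)%Z].
Proof.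
move=> /dvdnP [k hk]; have hq : p%:Z = k%:Z * 4 by rewrite hk PoszM.
elim: n => [|n [h01 h00 h11]].
  by rewrite expr0 !id1E /=.
have [c00 c01 c10 c11] := catCE p q.
rewrite exprSr -[_ * catC p q]/(_ *m _) !mul2E c00 c01 c10 c11 PoszD PoszM hq.
move: h01 h00 h11 => /dvdzP [a ha] /dvdzP [b hb] /dvdzP [c hc].
have e00 : (catC p q ^+ n) o0 o0 = b * 4 + 1 by rewrite -hb subrK.
have e11 : (catC p q ^+ n) o1 o1 = c * 4 + 1 by rewrite -hc subrK.
rewrite ha e00 e11.
split; apply/dvdzP.
- by exists ((b * 4 + 1) * k%:Z + a * (1 + 4 * k%:Z * q%:Z)); ring.
- by exists (b + a * q%:Z); ring.
- by exists ((catC p q ^+ n) o1 o0 * k%:Z + c + 4 * c * k%:Z * q%:Z + k%:Z * q%:Z); ring.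
Qed.

Lemma Good4_Tes p q Tes : (0 < p)%N -> (0 < q)%N ->
  is_least_period_mx p q `|e_s p q|%N Tes -> Good4 (catC p q ^+ Tes).
Proof.
move=> p0 q0 [T0 [hc _]].
have [b1 b2] := es_bounds p0 q0.
have hd : dvM `|e_s p q|%N (catC p q ^+ Tes - 1).
  by move=> i j; rewrite !mxE -eqz_mod_dvd; apply/eqP; move: (hc i j); rewrite /scalar_mx mxE.
have e1 : (1 <= `|e_s p q|)%N by lia.
have d1 : dvM 1 (catC p q ^+ Tes - 1) by apply: dvM_le e1 hd.
case: (boolP ((4 %| p)%N || (4 %| q)%N)) => h4.
  split => //.
  have E : forall i j, (catC p q ^+ Tes - 1) i j = (catC p q ^+ Tes) i j - (i == j)%:R.
    by move=> i j; rewrite !mxE.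
  rewrite !E /=.
  case/orP: h4 => h4.
    by have [? ? ?] := inv4p q Tes h4; split => //; split => //; left; rewrite subr0.
  by have [? ? ?] := inv4q p Tes h4; split => //; split => //; right; rewrite subr0.
move: h4; rewrite negb_or => /andP [n4p n4q].
have e2 : (2 <= `|e_s p q|)%N by move: (b2 n4p n4q); lia.
have d2 : dvM 2 (catC p q ^+ Tes - 1) by apply: dvM_le e2 hd.
by split => //; split; [exact: d2 | split; [exact: d2 | left; exact: d2]].
Qed.

Definition colv e (v : pt e) : 'cV[int]_2 :=
  \matrix_(i, j) (if i == o0 then (v.1 : nat)%:Z else (v.2 : nat)%:Z).

Lemma colvE e (v : pt e) j : colv v o0 j = (v.1 : nat)%:Z /\ colv v o1 j = (v.2 : nat)%:Z.
Proof. by rewrite !mxE. Qed.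

Lemma modE_dv e m : ((2 ^ e)%N%:Z %| (m %% 2 ^ e)%N%:Z - m%:Z)%Z.
Proof.
apply/dvdzP; exists (- (m %/ 2 ^ e)%N%:Z).
by rewrite {2}(divn_eq m (2 ^ e)) PoszD PoszM; ring.
Qed.

Lemma subE m n (X Y : 'M[int]_(m, n)) i j : (X - Y) i j = X i j - Y i j.
Proof. by rewrite !mxE. Qed.

Lemma colv_step p q e (v : pt e) : dvM e (colv (cat_map p q e v) - catC p q *m colv v).
Proof.
have [c00 c01 c10 c11] := catCE p q.
move=> i j; rewrite subE mul2E; have [a0 a1] := colvE v j.
have [b0 b1] := colvE (cat_map p q e v) j.
rewrite a0 a1; case: (ord2P i) => ->.
  rewrite b0 c00 c01 /=.
  have -> : 1 * (v.1 : nat)%:Z + p%:Z * (v.2 : nat)%:Z = (1 * v.1 + p * v.2)%N%:Z by rewrite PoszD !PoszM.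
  exact: modE_dv.
rewrite b1 c10 c11 /=.
have -> : q%:Z * (v.1 : nat)%:Z + (1 + p * q)%N%:Z * (v.2 : nat)%:Z = (q * v.1 + (1 + p * q) * v.2)%N%:Z.
  by rewrite PoszD !PoszM.
exact: modE_dv.
Qed.

Lemma colv_iter p q e n (v : pt e) :
  dvM e (colv (iter n (cat_map p q e) v) - catC p q ^+ n *m colv v).
Proof.
elim: n => [|n ih]; first by rewrite expr0 mul1mx subrr; apply: dvM0.
set w := iter n (cat_map p q e) v.
have -> : colv (iter n.+1 (cat_map p q e) v) - catC p q ^+ n.+1 *m colv v =
  (colv (cat_map p q e w) - catC p q *m colv w) + catC p q *m (colv w - catC p q ^+ n *m colv v).
  by rewrite exprS -mulmxA mulmxBr addrA subrK.
by apply: dvM_add; [apply: colv_step | apply: dvM_mull].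
Qed.

Lemma small_eq (M a b : nat) : (a < M)%N -> (b < M)%N -> (M%:Z %| a%:Z - b%:Z)%Z -> a = b.
Proof.
move=> ha hb /dvdzP [k hk]; case: (ltgtP k 0) => k0.
- have : k <= -1 by lia. nia.
- have : 1 <= k by lia. nia.
- move: hk; rewrite k0 mul0r; lia.
Qed.

Lemma colv_eq e (v w : pt e) : dvM e (colv v - colv w) -> v = w.
Proof.
move=> h; have h0 := h o0 ord0; have h1 := h o1 ord0.
rewrite subE in h0; rewrite subE in h1.
have [a0 a1] := colvE v ord0; have [b0 b1] := colvE w ord0.
rewrite a0 b0 in h0; rewrite a1 b1 in h1.
case: v w h0 h1 {h a0 a1 b0 b1} => [v1 v2] [w1 w2] /= h0 h1.
congr pair; apply: val_inj.
  exact: (small_eq (ltn_ord _) (ltn_ord _) h0).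
exact: (small_eq (ltn_ord _) (ltn_ord _) h1).
Qed.

Lemma good_cong (C : 'M[int]_2) e n (x y : 'cV[int]_2) :
  dvM e (x - y) -> good C e n x -> good C e n y.
Proof.
move=> hxy; rewrite /good => hx.
move: hx; set A := C ^+ n - 1 => hx.
have -> : A *m y = A *m x - A *m (x - y).
  by rewrite mulmxBr opprB addrC subrK.
by apply: dvM_sub => //; apply: dvM_mull.
Qed.

Lemma lp_cong (C : 'M[int]_2) e n (x y : 'cV[int]_2) :
  dvM e (x - y) -> lp C e x n <-> lp C e y n.
Proof.
move=> h; have h' : dvM e (y - x) by rewrite -opprB; apply: dvM_opp.
split=> [[n0 [g m]]|[n0 [g m]]]; split => //; split.
- exact: good_cong h g.
- by move=> k hk gk; apply: (m k hk); apply: good_cong h' gk.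
- exact: good_cong h' g.
- by move=> k hk gk; apply: (m k hk); apply: good_cong h gk.
Qed.

Lemma iter_good p q e n (v : pt e) :
  iter n (cat_map p q e) v = v <-> good (catC p q) e n (colv v).
Proof.
have hi := colv_iter p q n v.
split => h.
  rewrite /good mulmxBl mul1mx; rewrite h in hi.
  by rewrite -opprB; apply: dvM_opp.
apply: colv_eq.
have -> : colv (iter n (cat_map p q e) v) - colv v =
  (colv (iter n (cat_map p q e) v) - catC p q ^+ n *m colv v) + (catC p q ^+ n - 1) *m colv v.
  by rewrite mulmxBl mul1mx addrA subrK.
exact: dvM_add.
Qed.

Lemma lp_iff p q e n (v : pt e) :
  least_period (cat_map p q e) v n <-> lp (catC p q) e (colv v) n.
Proof.
split.
  move/lpP => [n0 h hm]; split => //; split; first exact/iter_good.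
  by move=> m hmn /iter_good; apply: hm.
move=> [n0 [g hm]]; apply/lpP; split => //; first exact/iter_good.
by move=> m hmn /iter_good; apply: hm.
Qed.

Definition proj e (w : pt e.+1) : pt e := (mkres e w.1, mkres e w.2).

Lemma colv_proj e (w : pt e.+1) : dvM e (colv w - colv (proj w)).
Proof.
move=> i j; rewrite subE; have [a0 a1] := colvE w j; have [b0 b1] := colvE (proj w) j.
by case: (ord2P i) => ->; rewrite ?a0 ?b0 ?a1 ?b1 -opprB rpredN modE_dv.
Qed.

Definition phi e (x : pt e * (bool * bool)) : pt e.+1 :=
  (mkres e.+1 (x.1.1 + x.2.1 * 2 ^ e), mkres e.+1 (x.1.2 + x.2.2 * 2 ^ e)).
Definition psi e (w : pt e.+1) : pt e * (bool * bool) :=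
  (proj w, (2 ^ e <= w.1, 2 ^ e <= w.2))%N.

Lemma ar1 e (a : nat) (b : bool) : (a < 2 ^ e)%N ->
  [/\ ((a + b * 2 ^ e) %% 2 ^ e.+1 = a + b * 2 ^ e)%N,
      ((a + b * 2 ^ e) %% 2 ^ e = a)%N & (2 ^ e <= a + b * 2 ^ e)%N = b].
Proof.
move=> ha; have M0 : (0 < 2 ^ e)%N by rewrite expn_gt0.
split.
- by rewrite modn_small // expnS; case: b; lia.
- by rewrite addnC modnMDl modn_small.
- by case: b; lia.
Qed.

Lemma ar2 e (y : nat) : (y < 2 ^ e.+1)%N ->
  (y %% 2 ^ e + (2 ^ e <= y) * 2 ^ e = y)%N.
Proof.
move=> hy; rewrite expnS in hy; case: (leqP (2 ^ e) y) => h /=.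
  have -> : y = (2 ^ e + (y - 2 ^ e))%N by lia.
  by rewrite modnDl modn_small; lia.
by rewrite modn_small //; lia.
Qed.

Lemma psiK e : cancel (@psi e) (@phi e).
Proof.
move=> [w1 w2]; rewrite /phi /psi /proj /=.
congr pair; apply: val_inj => /=; rewrite ar2 ?modn_small //.
Qed.

Lemma phiK e : cancel (@phi e) (@psi e).
Proof.
move=> [[v1 v2] [b1 b2]]; rewrite /phi /psi /proj /=.
have [h11 h12 h13] := ar1 b1 (ltn_ord v1).
have [h21 h22 h23] := ar1 b2 (ltn_ord v2).
congr pair; first by congr pair; apply: val_inj => /=; rewrite ?h11 ?h12 ?h21 ?h22.
by rewrite h11 h13 h21 h23.
Qed.

Lemma card_fiber e (A : {set pt e}) : #|[set w : pt e.+1 | proj w \in A]| = (4 * #|A|)%N.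
Proof.
rewrite -(card_imset _ (can_inj (@psiK e))).
have -> : (@psi e) @: [set w : pt e.+1 | proj w \in A] = setX A [set: bool * bool].
  apply/setP => x; rewrite !inE andbT; apply/imsetP/idP.
    by case=> w; rewrite inE => hw ->.
  move=> hx; exists (phi x); last by rewrite phiK.
  rewrite inE; have : (psi (phi x)).1 = x.1 by rewrite phiK.
  by rewrite /= => ->.
by rewrite cardsX cardsT card_prod card_bool mulnC.
Qed.

Theorem theorem3 (p q : nat) (hp : (0 < p)%N) (hq : (0 < q)%N)
  (Tes : nat) (hTes : is_least_period_mx p q `|e_s p q|%N Tes)
  (e Tc : nat) (he : (0 < e)%N) (hTc : (0 < Tc)%N) (hgt : (Tes < Tc)%N) :
  (2 * Ncycles p q Tc e = Ncycles p q (2 * Tc) e.+1)%N.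
Proof.
have hG := Good4_Tes hp hq hTes.
have T0pos : (0 < Tes)%N by case: hTes.
have key : [set w : pt e.+1 | least_period (cat_map p q e.+1) w (2 * Tc)] =
           [set w : pt e.+1 | proj w \in [set v : pt e | least_period (cat_map p q e) v Tc]].
  apply/setP => w; rewrite !inE; apply/idP/idP.
    move/lp_iff; rewrite mulnC => h; apply/lp_iff.
    apply/(lp_cong _ _ (colv_proj w)).
    exact: (lift2 T0pos hG hgt h).
  move/lp_iff => h; apply/lp_iff; rewrite mulnC.
  apply: (lift1 T0pos hG) => //.
  by apply/(lp_cong _ _ (colv_proj w)).
have c1 := count_cycles (cat_map p q e) hTc.
have T2 : (0 < 2 * Tc)%N by rewrite muln_gt0.
have c2 := count_cycles (cat_map p q e.+1) T2.
rewrite {1}key card_fiber c1 in c2.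
rewrite /Ncycles; move: c2.
set N1 := #|_|; set N2 := #|_| => c2.
have : (2 * Tc * (2 * N1) = 2 * Tc * N2)%N by rewrite -c2; ring.
move/eqP; rewrite eqn_mul2l muln_eq0 /= => /orP [/eqP|/eqP ->]; [lia | reflexivity].
Qed.
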